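(* For all integers $a\ge0$, $b\ge0$ and $d\ge1$, $$\sum_{c=0}^{b}\binom{b}{c}(2c+d-2)!!\,(2(a+b-c)+1)!!=\frac{(2a+1)!!\,(d-2)!!\,(2(a+b)+d+1)!!}{(2a+d+1)!!}.$$
   Context: $n!!$ denotes the double factorial, with the conventions $0!!=(-1)!!=1$. *)

(* Defs.v *)
From mathcomp Require Import all_boot all_order all_algebra.
Set Implicit Arguments. Unset Strict Implicit. Unset Printing Implicit Defensive.

Fixpoint dfact (n : nat) : nat :=
  match n with
  | 0 => 1
  | 1 => 1
  | (m.+1 as k).+1 => k.+1 * dfact m
  end.

(* Extension to integers with the convention (-1)!! = 1 (and 1 for all
   negative arguments; only -1 ever occurs in the statement). *)
Definition dfactz (z : int) : nat :=
  match z with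
  | Posz n => dfact n
  | Negz _ => 1
  end.

(* Main.v *)
Require Import Defs.
From mathcomp Require Import all_boot all_order all_algebra.
From mathcomp Require Import ring lra zify.
Import GRing.Theory Num.Theory.
Local Open Scope ring_scope.

Definition ee (d : nat) : nat := dfactz (d%:Z - 2).

Lemma PoszSS2 n : (n.+2)%:Z - 2 = n%:Z.
Proof. by rewrite -[n.+2]addn2 PoszD addrK. Qed.

Lemma eeSS n : ee n.+2 = dfact n.
Proof. by rewrite /ee PoszSS2. Qed.

Lemma eeS d : (1 <= d)%N -> ee d.+2 = (d * ee d)%N.
Proof.
case: d => [|[|d]] // _.
  by rewrite eeSS /ee PoszSS2.
Qed.

Lemma dfact_gt0 n : (0 < dfact n)%N.
Proof.
have H : forall n, (0 < dfact n)%N /\ (0 < dfact n.+1)%N.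
  elim=> [|m [h1 h2]] //; split => //=. by rewrite muln_gt0 h1.
by case: (H n).
Qed.

Lemma ee_gt0 d : (0 < ee d)%N.
Proof. case: d => [|[|d]] //; by rewrite eeSS dfact_gt0. Qed.

Definition T (a b d : nat) : rat :=
  \sum_(0 <= c < b.+1)
     ('C(b, c)%:R * (ee (2 * c + d))%:R * (dfact (2 * (a + b - c) + 1)%N)%:R).

Lemma Tstep a b d : T a b.+1 d = T a.+1 b d + T a b d.+2.
Proof.
rewrite /T big_nat_recl // bin0.
under eq_bigr => i _ do rewrite binS natrD !mulrDl.
rewrite big_split /= addrA; congr (_ + _); last first.
  apply: eq_bigr => i _; congr (_ * (ee _)%:R * (dfact _)%:R); lia.
rewrite [in RHS]big_nat_recl // bin0.
have -> : (a + b.+1 - 0 = a.+1 + b - 0)%N by lia.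
congr (_ + _).
rewrite big_nat_recr //= bin_small // !mul0r addr0.
apply: eq_bigr => i _; congr (_ * (ee _)%:R * (dfact _)%:R); lia.
Qed.

Lemma dfactSS n : dfact n.+2 = (n.+2 * dfact n)%N.
Proof. by []. Qed.

Lemma dfact_neq0 n : (dfact n)%:R != 0 :> rat.
Proof. by rewrite pnatr_eq0 -lt0n dfact_gt0. Qed.

Lemma TF b a d : (1 <= d)%N -> T a b d =
  (dfact (2 * a + 1)%N)%:R * (ee d)%:R * (dfact (2 * (a + b) + d + 1)%N)%:R
      / (dfact (2 * a + d + 1)%N)%:R.
Proof.
elim: b a d => [|b IH] a d hd.
  rewrite /T big_nat1 bin0 mul1r muln0 add0n addn0 subn0 mulrC.
  have e : (2 * a + d + 1 = 2 * a + 1 + d)%N by lia.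
  by rewrite e mulfK ?dfact_neq0 // -e dfact_neq0.
rewrite Tstep IH // IH //.
have -> : (2 * a.+1 + 1 = (2 * a + 1).+2)%N by lia.
have -> : (2 * a.+1 + d + 1 = (2 * a + d + 1).+2)%N by lia.
have -> : (2 * a + d.+2 + 1 = (2 * a + d + 1).+2)%N by lia.
have -> : (2 * (a.+1 + b) + d + 1 = (2 * (a + b) + d + 1).+2)%N by lia.
have -> : (2 * (a + b) + d.+2 + 1 = (2 * (a + b) + d + 1).+2)%N by lia.
have -> : (2 * (a + b.+1) + d + 1 = (2 * (a + b) + d + 1).+2)%N by lia.
rewrite eeS // !dfactSS !natrM.
have h1 := dfact_neq0 (2 * a + d + 1).
have h2 : ((2 * a + d + 1).+2)%:R != 0 :> rat by rewrite pnatr_eq0.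
move: h1 h2.
set X := (dfact (2 * a + d + 1))%:R.
set Y := ((2 * a + d + 1).+2)%:R.
move=> h1 h2.

have eY : Y = ((2*a+1).+2)%:R + d%:R by rewrite /Y -natrD; congr _%:R; lia.
rewrite eY in h2 *.
field.
rewrite h1 /=; apply: lt0r_neq0. have := ler0n rat a. have := ler0n rat d. lra.
Qed.

Theorem lemma3p5 (a b d : nat) (hd : (1 <= d)%N) :
  \sum_(0 <= c < b.+1)
     ('C(b, c)%:R * (dfactz (2 * c%:Z + d%:Z - 2))%:R
        * (dfact (2 * (a + b - c) + 1)%N)%:R)
  = (dfact (2 * a + 1)%N)%:R * (dfactz (d%:Z - 2))%:R
      * (dfact (2 * (a + b) + d + 1)%N)%:R
      / (dfact (2 * a + d + 1)%N)%:R :> rat.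
Proof.
rewrite -/(ee d) -TF // /T.

Qed.
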